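(* For every integer $n\ge5$ there exists a prismatic cube $\Pi_{4,3}^n$ in hyperbolic space $\mathbb{H}^3$.
   Context: Let $P_{4,3}^n$ be the regular (possibly ideal or hyperideal) hyperbolic cube centered at a point $O$ whose dihedral angle is $2\pi/n$, and let $\Gamma_{4,3}^n$ be the discrete group generated by the hyperbolic reflections in the planes of the faces of $P_{4,3}^n$ (it has $P_{4,3}^n$ as a fundamental domain). A prismatic cube $\Pi_{4,3}^n$ is obtained as follows: one chooses a smaller compact regular cube $Q$ centered at $O$, with the same symmetry axes as $P_{4,3}^n$ and lying inside it, such that for each face $F$ of $Q$, the face $F$ and its image $F'$ under reflection in the corresponding face of $P_{4,3}^n$ are the bottom and top of a prism whose four lateral faces are regular squares (all edges of equal length). $\Pi_{4,3}^n$ is the union of all images under $\Gamma_{4,3}^n$ of these lateral squares; it is an infinite polyhedral surface consisting of squares. Existence of $\Pi_{4,3}^n$ means existence of such a $Q$. *)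

(* Defs.v *)
(* concrete reals R.  Hyperbolic 3-space is modelled by the
   hyperboloid model  H^3 = { x in R^{3,1} | <x,x> = -1, x0 > 0 }. *)
From Stdlib Require Import Reals Lra.
Open Scope R_scope.

Record V4 := mkV { c0 : R; c1 : R; c2 : R; c3 : R }.

Definition mink (x y : V4) : R :=
  - c0 x * c0 y + c1 x * c1 y + c2 x * c2 y + c3 x * c3 y.

Definition vadd (x y : V4) : V4 :=
  mkV (c0 x + c0 y) (c1 x + c1 y) (c2 x + c2 y) (c3 x + c3 y).
Definition vscale (a : R) (x : V4) : V4 :=
  mkV (a * c0 x) (a * c1 x) (a * c2 x) (a * c3 x).

Definition in_H3 (x : V4) : Prop := mink x x = -1 /\ 0 < c0 x.

Definition O_pt : V4 := mkV 1 0 0 0.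

(* hyperbolic distance: cosh (dist x y) = - <x,y> *)
Definition arcosh (t : R) : R := ln (t + sqrt (t * t - 1)).
Definition hdist (x y : V4) : R := arcosh (- mink x y).

(* angle at q between the geodesic segments [q,p] and [q,r]:
   initial tangent vector at q towards p is p + <q,p> q *)
Definition tangent (q p : V4) : V4 := vadd p (vscale (mink q p) q).
Definition hangle (p q r : V4) : R :=
  let t1 := tangent q p in let t2 := tangent q r in
  acos (mink t1 t2 / sqrt (mink t1 t1 * mink t2 t2)).

(* a hyperbolic plane = { x in H^3 | <x,m> = 0 } with <m,m> = 1 ;
   reflection in that plane *)
Definition reflect (m x : V4) : V4 := vadd x (vscale (-2 * mink x m) m).

Definition coplanar4 (p1 p2 p3 p4 : V4) : Prop :=
  exists m : V4, mink m m = 1 /\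
    mink p1 m = 0 /\ mink p2 m = 0 /\ mink p3 m = 0 /\ mink p4 m = 0.

Definition regular_square (p1 p2 p3 p4 : V4) : Prop :=
  coplanar4 p1 p2 p3 p4 /\
  hdist p1 p2 = hdist p2 p3 /\ hdist p2 p3 = hdist p3 p4 /\
  hdist p3 p4 = hdist p4 p1 /\
  hangle p4 p1 p2 = hangle p1 p2 p3 /\ hangle p1 p2 p3 = hangle p2 p3 p4 /\
  hangle p2 p3 p4 = hangle p3 p4 p1.

Inductive axis := A1 | A2 | A3.

Definition axis_eqb (i j : axis) : bool :=
  match i, j with A1, A1 | A2, A2 | A3, A3 => true | _, _ => false end.

Definition sgn (b : bool) : R := if b then 1 else -1.

(* Regular cube P centered at O, faces orthogonal to the coordinate axes at
   hyperbolic distance d from O.  The face orthogonal to axis i on side s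
   lies in the plane with unit outward normal  pnormal d i s,
   i.e. the plane  x_i / x_0 = sgn s * tanh d. *)
Definition pnormal (d : R) (i : axis) (s : bool) : V4 :=
  let e j := if axis_eqb i j then sgn s * cosh d else 0 in
  mkV (sinh d) (e A1) (e A2) (e A3).

(* P = intersection of the six half-spaces containing O *)
Definition in_P (d : R) (x : V4) : Prop :=
  forall (i : axis) (s : bool), mink x (pnormal d i s) <= 0.

(* dihedral angle of P (between two adjacent faces, with outward unit
   normals m1 m2 : cos(angle) = - <m1,m2>); all are equal by symmetry *)
Definition cube_dihedral (d : R) : R :=
  acos (- mink (pnormal d A1 true) (pnormal d A2 true)).

(* Compact regular cube Q centered at O with the same symmetry axes:
   its vertices are on the diagonals, indexed by sign patterns sg. *)
Definition qvertex (w : R) (sg : axis -> bool) : V4 :=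
  mkV (sqrt (1 + 3 * (w * w))) (sgn (sg A1) * w) (sgn (sg A2) * w)
      (sgn (sg A3) * w).

Definition flip (sg : axis -> bool) (j : axis) : axis -> bool :=
  fun k => if axis_eqb j k then negb (sg k) else sg k.

(* Existence of the prismatic cube Pi_{4,3} for the cube P of parameter d:
   there is a (nondegenerate) compact regular cube Q (parameter w > 0)
   lying in P such that, for every face F of Q (the face orthogonal to
   axis i on side s, with vertices sg such that sg i = s) and every edge
   [v1,v2] of F (v2 = flip of v1 along an axis j <> i), the lateral face
   v1 v2 v2' v1' of the prism with bottom F and top F' = reflection of F in
   the corresponding face plane of P is a regular square. *)
Definition prismatic_cube_exists (d : R) : Prop :=
  exists w : R, 0 < w /\
    (forall sg, in_P d (qvertex w sg)) /\
    (forall (i : axis) (s : bool) (j : axis) (sg : axis -> bool),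
        j <> i -> sg i = s ->
        let v1 := qvertex w sg in
        let v2 := qvertex w (flip sg j) in
        let m := pnormal d i s in
        regular_square v1 v2 (reflect m v2) (reflect m v1)).

(* Main.v *)
Require Import Defs.
From Stdlib Require Import Reals Lra Psatz.
Import Defs.
Open Scope R_scope.

Lemma V4_ext x y : c0 x = c0 y -> c1 x = c1 y -> c2 x = c2 y -> c3 x = c3 y -> x = y.
Proof. destruct x, y; simpl; intros; subst; reflexivity. Qed.

Lemma mink_sym x y : mink x y = mink y x.
Proof. unfold mink; ring. Qed.
Lemma mink_add_l x y z : mink (vadd x y) z = mink x z + mink y z.
Proof. unfold mink, vadd; simpl; ring. Qed.
Lemma mink_add_r x y z : mink x (vadd y z) = mink x y + mink x z.
Proof. unfold mink, vadd; simpl; ring. Qed.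
Lemma mink_scale_l a x z : mink (vscale a x) z = a * mink x z.
Proof. unfold mink, vscale; simpl; ring. Qed.
Lemma mink_scale_r a x z : mink z (vscale a x) = a * mink z x.
Proof. unfold mink, vscale; simpl; ring. Qed.

Lemma reflect_mink m x y : mink m m = 1 ->
  mink (reflect m x) (reflect m y) = mink x y.
Proof.
  intro H; unfold reflect.
  repeat rewrite ?mink_add_l, ?mink_add_r, ?mink_scale_l, ?mink_scale_r.
  rewrite (mink_sym m y), H; ring.
Qed.

Lemma reflect_add m x y : reflect m (vadd x y) = vadd (reflect m x) (reflect m y).
Proof. unfold reflect; rewrite mink_add_l; apply V4_ext; simpl; ring. Qed.
Lemma reflect_scale m a x : reflect m (vscale a x) = vscale a (reflect m x).
Proof. unfold reflect; rewrite mink_scale_l; apply V4_ext; simpl; ring. Qed.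

Lemma reflect_invol m x : mink m m = 1 -> reflect m (reflect m x) = x.
Proof.
  intro H; unfold reflect; rewrite mink_add_l, mink_scale_l, H.
  apply V4_ext; simpl; ring.
Qed.

Lemma reflect_comm e m x : mink e m = 0 ->
  reflect m (reflect e x) = reflect e (reflect m x).
Proof.
  intro H; unfold reflect; rewrite !mink_add_l, !mink_scale_l, H, (mink_sym m e), H.
  apply V4_ext; simpl; ring.
Qed.

Lemma hangle_sym p q r : hangle p q r = hangle r q p.
Proof.
  unfold hangle; cbv zeta.
  rewrite (mink_sym (tangent q r) (tangent q p)).
  rewrite (Rmult_comm (mink (tangent q r) (tangent q r))). reflexivity.
Qed.

Lemma tangent_reflect m p q : mink m m = 1 ->
  tangent (reflect m q) (reflect m p) = reflect m (tangent q p).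
Proof.
  intro H; unfold tangent; rewrite reflect_mink by exact H.
  rewrite reflect_add, reflect_scale; reflexivity.
Qed.

Lemma hangle_reflect m p q r : mink m m = 1 ->
  hangle (reflect m p) (reflect m q) (reflect m r) = hangle p q r.
Proof.
  intro H; unfold hangle; cbv zeta.
  rewrite !tangent_reflect by exact H. rewrite !reflect_mink by exact H.
  reflexivity.
Qed.

Lemma square_abstract (v1 v2 m e n : V4) :
  mink m m = 1 -> mink e e = 1 -> mink e m = 0 -> reflect e v1 = v2 ->
  mink v1 v2 = mink v1 (reflect m v1) ->
  mink v2 (reflect m v2) = mink v1 (reflect m v1) ->
  0 < mink n n -> mink v1 n = 0 -> mink v2 n = 0 -> mink m n = 0 ->
  regular_square v1 v2 (reflect m v2) (reflect m v1).
Proof.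
  intros Hm He Hem HE Hd1 Hd2 Hn Hn1 Hn2 Hmn.
  assert (HE2 : reflect e v2 = v1) by (rewrite <- HE; apply reflect_invol; exact He).
  assert (HER : forall v, reflect e (reflect m v) = reflect m (reflect e v))
    by (intro v; symmetry; apply reflect_comm; exact Hem).
  split; [| split; [| split; [| split; [| split; [| split]]]]].
  - pose (s := sqrt (mink n n)).
    assert (Hs : 0 < s) by (apply sqrt_lt_R0; exact Hn).
    assert (Hs2 : s * s = mink n n) by (apply sqrt_sqrt; lra).
    exists (vscale (/ s) n).
    assert (Hrn : forall v, mink v n = 0 -> mink (reflect m v) n = 0).
    { intros v Hv; unfold reflect; rewrite mink_add_l, mink_scale_l, Hv, Hmn; ring. }
    rewrite mink_scale_l, !mink_scale_r, Hrn, Hrn, Hn1, Hn2 by assumption.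
    repeat split; try ring.
    rewrite <- Hs2; field; lra.
  - unfold hdist; rewrite Hd1, Hd2; reflexivity.
  - unfold hdist; rewrite reflect_mink by exact Hm.
    rewrite (mink_sym v2 v1), Hd1, Hd2; reflexivity.
  - unfold hdist; rewrite reflect_mink by exact Hm.
    rewrite (mink_sym v2 v1), Hd1, (mink_sym (reflect m v1) v1); reflexivity.
  - rewrite <- (hangle_reflect e (reflect m v1) v1 v2) by exact He.
    rewrite HER, HE, HE2. apply hangle_sym.
  - rewrite <- (hangle_reflect m v1 v2 (reflect m v2)) by exact Hm.
    rewrite reflect_invol by exact Hm. apply hangle_sym.
  - rewrite <- (hangle_reflect e v2 (reflect m v2) (reflect m v1)) by exact He.
    rewrite !HER, HE, HE2. apply hangle_sym.
Qed.

Definition ej (j : axis) : V4 :=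
  mkV 0 (if axis_eqb j A1 then 1 else 0) (if axis_eqb j A2 then 1 else 0)
      (if axis_eqb j A3 then 1 else 0).

Lemma ej_norm j : mink (ej j) (ej j) = 1.
Proof. destruct j; unfold mink, ej; simpl; ring. Qed.

Lemma pnormal_norm d i s : mink (pnormal d i s) (pnormal d i s) = 1.
Proof.
  assert (H : cosh d * cosh d - sinh d * sinh d = 1).
  { unfold cosh, sinh.
    assert (exp d * exp (- d) = 1) by (rewrite <- exp_plus; replace (d + - d) with 0 by ring; apply exp_0).
    field_simplify; nra. }
  destruct i, s; unfold mink, pnormal; simpl; nra.
Qed.

Lemma ej_pnormal d i s j : j <> i -> mink (ej j) (pnormal d i s) = 0.
Proof. intro H; destruct i, j; try congruence; destruct s; unfold mink, ej, pnormal; simpl; ring. Qed.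

Lemma qvertex_flip w sg j : reflect (ej j) (qvertex w sg) = qvertex w (flip sg j).
Proof.
  destruct j; unfold reflect, qvertex, flip, ej, mink; apply V4_ext; simpl;
  destruct (sg A1), (sg A2), (sg A3); simpl; ring.
Qed.

Lemma flip_other sg i j : j <> i -> flip sg j i = sg i.
Proof. intro H; unfold flip; destruct i, j; simpl; congruence. Qed.

Lemma qvertex_norm w sg : mink (qvertex w sg) (qvertex w sg) = -1.
Proof.
  assert (Ha : sqrt (1 + 3 * (w * w)) * sqrt (1 + 3 * (w * w)) = 1 + 3 * (w * w))
    by (apply sqrt_sqrt; nra).
  unfold mink, qvertex; simpl.
  destruct (sg A1), (sg A2), (sg A3); simpl; nra.
Qed.

Lemma qvertex_flip_mink w sg j :
  mink (qvertex w sg) (qvertex w (flip sg j)) = -1 - 2 * (w * w).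
Proof.
  assert (Ha : sqrt (1 + 3 * (w * w)) * sqrt (1 + 3 * (w * w)) = 1 + 3 * (w * w))
    by (apply sqrt_sqrt; nra).
  unfold mink, qvertex, flip; destruct j; simpl;
  destruct (sg A1), (sg A2), (sg A3); simpl; nra.
Qed.

Lemma qvertex_pnormal d w sg i :
  mink (qvertex w sg) (pnormal d i (sg i)) = w * cosh d - sqrt (1 + 3 * (w * w)) * sinh d.
Proof.
  unfold mink, qvertex, pnormal; destruct i; simpl;
  destruct (sg A1), (sg A2), (sg A3); simpl; ring.
Qed.

Lemma mink_self_reflect m v :
  mink v (reflect m v) = mink v v - 2 * (mink v m * mink v m).
Proof. unfold reflect; rewrite mink_add_r, mink_scale_r; ring. Qed.

Definition nvec d w (i : axis) (s : bool) (j : axis) (sg : axis -> bool) : V4 :=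
  let a := sqrt (1 + 3 * (w * w)) in
  let e l := if axis_eqb i l then sgn s * sinh d * w else
             if axis_eqb j l then 0 else sgn (sg l) * (cosh d * a - sinh d * w) in
  mkV (w * cosh d) (e A1) (e A2) (e A3).

Lemma nvec_props d w i j sg : j <> i ->
  mink (pnormal d i (sg i)) (nvec d w i (sg i) j sg) = 0 /\
  mink (qvertex w sg) (nvec d w i (sg i) j sg) = 0 /\
  mink (qvertex w (flip sg j)) (nvec d w i (sg i) j sg) = 0 /\
  mink (nvec d w i (sg i) j sg) (nvec d w i (sg i) j sg) =
    - (w * w) * (cosh d * cosh d - sinh d * sinh d)
    + (cosh d * sqrt (1 + 3 * (w * w)) - sinh d * w) ^ 2.
Proof.
  intro H; unfold mink, nvec, pnormal, qvertex, flip;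
  destruct i, j; try congruence; simpl;
  destruct (sg A1), (sg A2), (sg A3); simpl; repeat split; ring.
Qed.

Lemma cosh_sinh d : cosh d * cosh d - sinh d * sinh d = 1.
Proof.
  unfold cosh, sinh.
  assert (exp d * exp (- d) = 1) by (rewrite <- exp_plus; replace (d + - d) with 0 by ring; apply exp_0).
  field_simplify; nra.
Qed.

Lemma cosh_pos d : 0 < cosh d.
Proof. unfold cosh. pose proof (exp_pos d); pose proof (exp_pos (-d)); lra. Qed.

Lemma real_pos ch sh w a : ch * ch - sh * sh = 1 -> 0 < ch -> 0 < sh -> 0 < w ->
  0 <= a -> a * a = 1 + 3 * (w * w) ->
  0 < - (w * w) * (ch * ch - sh * sh) + (ch * a - sh * w) ^ 2.
Proof.
  intros H1 H2 H3 H4 H5 H6.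
  assert (K1 : (w * (1 + sh)) * (w * (1 + sh)) < (ch * a) * (ch * a)).
  { replace ((ch * a) * (ch * a)) with ((ch * ch) * (a * a)) by ring.
    rewrite H6. assert (ch * ch = 1 + sh * sh) by lra. rewrite H.
    nra. }
  assert (K2 : w * (1 + sh) < ch * a).
  { destruct (Rlt_or_le (w * (1 + sh)) (ch * a)); auto.
    assert (0 <= ch * a) by nra. nra. }
  rewrite H1. nra.
Qed.

Lemma prism_from_w d w : 0 < sinh d -> 0 < w ->
  sqrt (1 + 3 * (w * w)) * sinh d = w * (1 + cosh d) ->
  prismatic_cube_exists d.
Proof.
  intros Hsh Hw Hkey.
  pose proof (cosh_sinh d) as Hcs. pose proof (cosh_pos d) as Hch.
  assert (Ha : sqrt (1 + 3 * (w * w)) * sqrt (1 + 3 * (w * w)) = 1 + 3 * (w * w))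
    by (apply sqrt_sqrt; nra).
  assert (Ha0 : 0 <= sqrt (1 + 3 * (w * w))) by apply sqrt_pos.
  exists w; split; [exact Hw | split].
  - intros sg i' s'. unfold mink, qvertex, pnormal.
    destruct i', s'; simpl; destruct (sg A1), (sg A2), (sg A3); simpl; nra.
  - intros i s j sg Hji Hs; cbv zeta; subst s.
    destruct (nvec_props d w i j sg Hji) as [N1 [N2 [N3 N4]]].
    assert (Hp2 : mink (qvertex w (flip sg j)) (pnormal d i (sg i)) =
                  w * cosh d - sqrt (1 + 3 * (w * w)) * sinh d).
    { rewrite <- (flip_other sg i j Hji). apply qvertex_pnormal. }
    pose proof (qvertex_pnormal d w sg i) as Hp1.
    assert (Hv : w * cosh d - sqrt (1 + 3 * (w * w)) * sinh d = - w) by lra.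
    apply square_abstract with (e := ej j) (n := nvec d w i (sg i) j sg).
    + apply pnormal_norm.
    + apply ej_norm.
    + apply ej_pnormal; exact Hji.
    + apply qvertex_flip.
    + rewrite qvertex_flip_mink, mink_self_reflect, qvertex_norm, Hp1, Hv; ring.
    + rewrite !mink_self_reflect, !qvertex_norm, Hp1, Hp2; reflexivity.
    + rewrite N4. apply real_pos; auto.
    + exact N2.
    + exact N3.
    + exact N1.
Qed.

Lemma w_exists d : 0 < sinh d -> sinh d * sinh d < 1 ->
  exists w, 0 < w /\ sqrt (1 + 3 * (w * w)) * sinh d = w * (1 + cosh d).
Proof.
  intros Hsh Hlt.
  pose proof (cosh_sinh d) as Hcs. pose proof (cosh_pos d) as Hch.
  set (sh := sinh d) in *. set (ch := cosh d) in *.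
  set (D := (1 + ch) * (1 + ch) - 3 * (sh * sh)).
  assert (HD : 0 < D) by (unfold D; nra).
  set (sD := sqrt D).
  assert (HsD : sD * sD = D) by (apply sqrt_sqrt; lra).
  assert (HsD0 : 0 < sD) by (apply sqrt_lt_R0; exact HD).
  exists (sh / sD). split.
  - apply Rdiv_lt_0_compat; assumption.
  - set (q := (1 + ch) / sD).
    assert (Hq : 1 + 3 * (sh / sD * (sh / sD)) = q * q).
    { unfold q. field_simplify; [| lra | lra].
      f_equal. replace (sD ^ 2) with (sD * sD) by ring. rewrite HsD. unfold D. ring. }
    rewrite Hq, sqrt_square.
    + unfold q. field. lra.
    + unfold q. apply Rlt_le, Rdiv_lt_0_compat; lra.
Qed.

Lemma cube_dihedral_eq d : cube_dihedral d = acos (sinh d * sinh d).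
Proof. unfold cube_dihedral; f_equal; unfold mink, pnormal; simpl; ring. Qed.

Lemma acos_pos_lt1 x : 0 < acos x -> x < 1.
Proof.
  intro H; destruct (Rlt_or_le x 1) as [h|h]; auto.
  unfold acos in H. destruct (Rle_dec x (-1)); [lra|].
  destruct (Rle_dec 1 x); lra.
Qed.

Theorem mainTheorem3 :
  forall n : nat, (5 <= n)%nat ->
    (exists d : R, 0 < d /\ cube_dihedral d = 2 * PI / INR n) /\
    (forall d : R, 0 < d -> cube_dihedral d = 2 * PI / INR n ->
       prismatic_cube_exists d).
Proof.
  intros n Hn.
  assert (Hn5 : 5 <= INR n) by (replace 5 with (INR 5) by (simpl; ring); apply le_INR; exact Hn).
  pose proof PI_RGT_0 as Hpi.
  assert (Hth0 : 0 < 2 * PI / INR n) by (apply Rdiv_lt_0_compat; lra).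
  assert (Hth1 : 2 * PI / INR n < PI / 2).
  { apply (Rmult_lt_reg_r (INR n)); [lra|].
    unfold Rdiv; rewrite Rmult_assoc, Rinv_l by lra. nra. }
  split.
  - assert (Hc : 0 < cos (2 * PI / INR n)) by (apply cos_gt_0; lra).
    exists (arcsinh (sqrt (cos (2 * PI / INR n)))). split.
    + rewrite <- arcsinh_0. apply arcsinh_lt. apply sqrt_lt_R0; exact Hc.
    + rewrite cube_dihedral_eq, sinh_arcsinh, sqrt_sqrt by lra.
      apply acos_cos; lra.
  - intros d Hd Hdi. rewrite cube_dihedral_eq in Hdi.
    assert (Hsh : 0 < sinh d) by (rewrite <- sinh_0; apply sinh_lt; exact Hd).
    assert (Hlt : sinh d * sinh d < 1) by (apply acos_pos_lt1; lra).
    destruct (w_exists d Hsh Hlt) as [w [Hw Hkey]].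
    exact (prism_from_w d w Hsh Hw Hkey).
Qed.
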